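(* Let $M=\begin{pmatrix}A&B\\ C&D\end{pmatrix}$ be an operator matrix on $X\oplus Y$, where $A\in\mathcal{L}(X)$ and $D\in\mathcal{L}(Y)$ have g-Drazin inverses, $B\in\mathcal{L}(Y,X)$, $C\in\mathcal{L}(X,Y)$. If $ABC=0$, $DCA=0$, $DCB=0$ and $CBCB=0$, then $M$ has a g-Drazin inverse in $\mathcal{L}(X\oplus Y)$.
   Context: $X,Y$ are complex Banach spaces; $\mathcal{L}(X)$ denotes the Banach algebra of bounded linear operators on $X$, and $\mathcal{L}(Y,X)$ the bounded operators from $Y$ to $X$. An element $a$ of a unital Banach algebra $\mathcal{A}$ is quasinilpotent if $\lim_{n\to\infty}\|a^n\|^{1/n}=0$. An element $a\in\mathcal{A}$ has a g-Drazin (generalized Drazin) inverse if there exists $x\in\mathcal{A}$ with $x=xax$, $ax=xa$, and $a-a^2x$ quasinilpotent; such $x$ is unique and is denoted $a^d$. *)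

(* Defs.v *)
From Stdlib Require Import Reals Lra.
Open Scope R_scope.

Definition Cplx : Type := (R * R)%type.
Definition Cone : Cplx := (1, 0).
Definition Cadd (a b : Cplx) : Cplx := (fst a + fst b, snd a + snd b).
Definition Cmul (a b : Cplx) : Cplx :=
  (fst a * fst b - snd a * snd b, fst a * snd b + snd a * fst b).
Definition Cmod (a : Cplx) : R := sqrt (fst a ^ 2 + snd a ^ 2).

Record CNormed := {
  car :> Type;
  vzero : car;
  vadd : car -> car -> car;
  vopp : car -> car;
  vscal : Cplx -> car -> car;
  vnorm : car -> R;
  vadd_assoc : forall x y z, vadd x (vadd y z) = vadd (vadd x y) z;
  vadd_comm : forall x y, vadd x y = vadd y x;
  vadd_zero : forall x, vadd x vzero = x;
  vadd_opp : forall x, vadd x (vopp x) = vzero;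
  vscal_one : forall x, vscal Cone x = x;
  vscal_mul : forall a b x, vscal (Cmul a b) x = vscal a (vscal b x);
  vscal_addl : forall a b x, vscal (Cadd a b) x = vadd (vscal a x) (vscal b x);
  vscal_addr : forall a x y, vscal a (vadd x y) = vadd (vscal a x) (vscal a y);
  vnorm_nonneg : forall x, 0 <= vnorm x;
  vnorm_eq0 : forall x, vnorm x = 0 -> x = vzero;
  vnorm_triangle : forall x y, vnorm (vadd x y) <= vnorm x + vnorm y;
  vnorm_scal : forall a x, vnorm (vscal a x) = Cmod a * vnorm x
}.

Arguments vzero {c}.
Arguments vadd {c}.
Arguments vopp {c}.
Arguments vscal {c}.
Arguments vnorm {c}.

Definition vdist {X : CNormed} (x y : X) : R := vnorm (vadd x (vopp y)).

Definition complete (X : CNormed) : Prop :=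
  forall u : nat -> X,
    (forall eps, 0 < eps -> exists N, forall m n, (N <= m)%nat -> (N <= n)%nat ->
        vdist (u m) (u n) < eps) ->
    exists l : X, forall eps, 0 < eps -> exists N, forall n, (N <= n)%nat ->
        vdist (u n) l < eps.

Definition bounded_linear {X Y : CNormed} (f : X -> Y) : Prop :=
  (forall x y, f (vadd x y) = vadd (f x) (f y)) /\
  (forall a x, f (vscal a x) = vscal a (f x)) /\
  (exists K, forall x, vnorm (f x) <= K * vnorm x).

(** Quasinilpotent: lim ||a^n||^(1/n) = 0, written out with the operator norm:
    ||a^n||^(1/n) <= eps  iff  ||a^n x|| <= eps^n ||x|| for all x. *)
Definition quasinilpotent {X : CNormed} (a : X -> X) : Prop :=
  forall eps, 0 < eps -> exists N, forall n, (N <= n)%nat ->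
    forall x, vnorm (Nat.iter n a x) <= eps ^ n * vnorm x.

Definition has_gDrazin {X : CNormed} (a : X -> X) : Prop :=
  bounded_linear a /\
  exists x : X -> X, bounded_linear x /\
    (forall v, x (a (x v)) = x v) /\
    (forall v, a (x v) = x (a v)) /\
    quasinilpotent (fun v => vadd (a v) (vopp (a (a (x v))))).

Definition dsum (X Y : CNormed) : CNormed.
Proof.
  refine {| car := (X * Y)%type;
            vzero := (vzero, vzero);
            vadd := fun p q => (vadd (fst p) (fst q), vadd (snd p) (snd q));
            vopp := fun p => (vopp (fst p), vopp (snd p));
            vscal := fun a p => (vscal a (fst p), vscal a (snd p));
            vnorm := fun p => vnorm (fst p) + vnorm (snd p) |}.
  - intros [] [] []; simpl; now rewrite !vadd_assoc.
  - intros [] []; simpl; now rewrite (vadd_comm X), (vadd_comm Y).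
  - intros []; simpl; now rewrite !vadd_zero.
  - intros []; simpl; now rewrite !vadd_opp.
  - intros []; simpl; now rewrite !vscal_one.
  - intros a b []; simpl; now rewrite !vscal_mul.
  - intros a b []; simpl; now rewrite !vscal_addl.
  - intros a [] []; simpl; now rewrite !vscal_addr.
  - intros []; simpl; pose proof (vnorm_nonneg X c); pose proof (vnorm_nonneg Y c0); lra.
  - intros [x y]; simpl; intro H.
    pose proof (vnorm_nonneg X x); pose proof (vnorm_nonneg Y y).
    rewrite (vnorm_eq0 X x), (vnorm_eq0 Y y); auto; lra.
  - intros [] []; simpl.
    pose proof (vnorm_triangle X c c1); pose proof (vnorm_triangle Y c0 c2); lra.
  - intros a []; simpl; rewrite !vnorm_scal; ring.
Defined.

Definition opmat {X Y : CNormed} (A : X -> X) (B : Y -> X) (C : X -> Y) (D : Y -> Y)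
  : dsum X Y -> dsum X Y :=
  fun p => (vadd (A (fst p)) (B (snd p)), vadd (C (fst p)) (D (snd p))).

(* Main.v *)
Require Import Defs.
From Stdlib Require Import Reals Lra Lia FunctionalExtensionality IndefiniteDescription Arith List.
Open Scope R_scope.

Arguments vadd_assoc {c}. Arguments vadd_comm {c}. Arguments vadd_zero {c}. Arguments vadd_opp {c}.
Arguments vscal_one {c}. Arguments vscal_mul {c}. Arguments vscal_addl {c}. Arguments vscal_addr {c}.
Arguments vnorm_nonneg {c}. Arguments vnorm_eq0 {c}. Arguments vnorm_triangle {c}. Arguments vnorm_scal {c}.

Section Basics.
Context {X : CNormed}.

Lemma vadd0l (x : X) : vadd vzero x = x.
Proof. rewrite vadd_comm; apply vadd_zero. Qed.

Lemma vaddNl (x : X) : vadd (vopp x) x = vzero.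
Proof. rewrite vadd_comm; apply vadd_opp. Qed.

Lemma vadd_cancel (x y z : X) : vadd x y = vadd x z -> y = z.
Proof.
  intro H. rewrite <- (vadd0l y), <- (vadd0l z), <- (vaddNl x).
  rewrite <- !vadd_assoc, H; reflexivity.
Qed.

Lemma vopp_uniq (x y : X) : vadd x y = vzero -> y = vopp x.
Proof. intro H; apply (vadd_cancel x); rewrite H, vadd_opp; reflexivity. Qed.

Lemma vopp_opp (x : X) : vopp (vopp x) = x.
Proof. symmetry; apply vopp_uniq; apply vaddNl. Qed.

Lemma vopp_add (x y : X) : vopp (vadd x y) = vadd (vopp x) (vopp y).
Proof.
  symmetry; apply vopp_uniq.
  rewrite (vadd_comm (vopp x)), vadd_assoc, <- (vadd_assoc x y), vadd_opp, vadd_zero, vadd_opp.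
  reflexivity.
Qed.

Lemma vopp_zero : vopp (@vzero X) = vzero.
Proof. symmetry; apply vopp_uniq; apply vadd_zero. Qed.

Lemma vsub_eq0 (x y : X) : vadd x (vopp y) = vzero -> x = y.
Proof. intro H. apply vopp_uniq in H. rewrite <- (vopp_opp x), <- H, vopp_opp; auto. Qed.

Lemma vscal0 (x : X) : vscal (0,0) x = vzero.
Proof.
  apply (vadd_cancel (vscal (0,0) x)). rewrite vadd_zero, <- vscal_addl.
  unfold Cadd; simpl. f_equal. f_equal; ring.
Qed.

Lemma vscal_zero a : vscal a (@vzero X) = vzero.
Proof.
  apply (vadd_cancel (vscal a vzero)). rewrite vadd_zero, <- vscal_addr, vadd_zero; auto.
Qed.

Lemma vscal_opp a (x : X) : vscal a (vopp x) = vopp (vscal a x).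
Proof. apply vopp_uniq. rewrite <- vscal_addr, vadd_opp, vscal_zero; auto. Qed.

Lemma vopp_scal (x : X) : vopp x = vscal (-1, 0) x.
Proof.
  symmetry; apply vopp_uniq. rewrite <- (vscal_one x) at 1. rewrite <- vscal_addl.
  unfold Cadd, Cone; simpl. rewrite <- (vscal0 x). f_equal. f_equal; ring.
Qed.

Lemma Cmod_real r : Cmod (r, 0) = Rabs r.
Proof. unfold Cmod; simpl. rewrite <- sqrt_Rsqr_abs. f_equal. unfold Rsqr; ring. Qed.

Lemma vnorm_opp (x : X) : vnorm (vopp x) = vnorm x.
Proof. rewrite vopp_scal, vnorm_scal, Cmod_real. replace (Rabs (-1)) with 1; [ring|]. rewrite Rabs_left; lra. Qed.

Lemma vnorm_zero : vnorm (@vzero X) = 0.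
Proof. rewrite <- (vscal0 vzero), vnorm_scal, Cmod_real, Rabs_R0; ring. Qed.

Lemma vnorm_sub_sym (x y : X) : vnorm (vadd x (vopp y)) = vnorm (vadd y (vopp x)).
Proof. rewrite <- vnorm_opp, vopp_add, vopp_opp, vadd_comm; auto. Qed.

Lemma vnorm_triangle_sub (x y z : X) :
  vnorm (vadd x (vopp z)) <= vnorm (vadd x (vopp y)) + vnorm (vadd y (vopp z)).
Proof.
  replace (vadd x (vopp z)) with (vadd (vadd x (vopp y)) (vadd y (vopp z))).
  apply vnorm_triangle.
  rewrite <- vadd_assoc, (vadd_assoc (vopp y)), vaddNl, vadd0l; auto.
Qed.

Lemma vnorm0_eq (x : X) : vnorm x <= 0 -> x = vzero.
Proof. intro H; apply vnorm_eq0; pose proof (vnorm_nonneg x); lra. Qed.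

Lemma vadd_swap (x y z : X) : vadd x (vadd y z) = vadd y (vadd x z).
Proof. rewrite !vadd_assoc, (vadd_comm x); auto. Qed.

Lemma vadd_sub_cancel (x y : X) : vadd (vadd x y) (vopp y) = x.
Proof. rewrite <- vadd_assoc, vadd_opp, vadd_zero; auto. Qed.

Lemma vadd_sub_cancel' (x y : X) : vadd (vadd x (vopp y)) y = x.
Proof. rewrite <- vadd_assoc, vaddNl, vadd_zero; auto. Qed.

Lemma vsub_move (x y z : X) : x = vadd z y -> vadd x (vopp y) = z.
Proof. intro H; subst; apply vadd_sub_cancel. Qed.

Lemma vadd_4 (a b c d : X) : vadd (vadd a b) (vadd c d) = vadd (vadd a c) (vadd b d).
Proof. rewrite <- !vadd_assoc. f_equal. apply vadd_swap. Qed.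

End Basics.

Section Lin.
Context {X Y : CNormed}.

Lemma lin_zero (f : X -> Y) : bounded_linear f -> f vzero = vzero.
Proof.
  intros [Ha _]. apply (vadd_cancel (f vzero)). rewrite <- Ha, !vadd_zero; auto.
Qed.

Lemma lin_opp (f : X -> Y) x : bounded_linear f -> f (vopp x) = vopp (f x).
Proof.
  intros H. apply vopp_uniq. destruct H as [Ha Hb]. rewrite <- Ha, vadd_opp.
  apply lin_zero; split; auto.
Qed.

Lemma lin_add (f : X -> Y) x y : bounded_linear f -> f (vadd x y) = vadd (f x) (f y).
Proof. intros [Ha _]; auto. Qed.

Lemma lin_sub (f : X -> Y) x y : bounded_linear f -> f (vadd x (vopp y)) = vadd (f x) (vopp (f y)).
Proof. intros H. rewrite lin_add, lin_opp; auto. Qed.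

Lemma lin_bound (f : X -> Y) : bounded_linear f -> exists K, 0 < K /\ forall x, vnorm (f x) <= K * vnorm x.
Proof.
  intros [_ [_ [K HK]]]. exists (Rmax K 1). split. pose proof (Rmax_r K 1); lra.
  intro x. eapply Rle_trans; [apply HK|]. apply Rmult_le_compat_r; [apply vnorm_nonneg| apply Rmax_l].
Qed.

End Lin.

Lemma bl_comp {X Y Z : CNormed} (f : Y -> Z) (g : X -> Y) :
  bounded_linear f -> bounded_linear g -> bounded_linear (fun x => f (g x)).
Proof.
  intros Hf Hg. pose proof (lin_bound f Hf) as [Kf [Kf0 HKf]]. pose proof (lin_bound g Hg) as [Kg [Kg0 HKg]].
  destruct Hf as [Hf1 [Hf2 _]]; destruct Hg as [Hg1 [Hg2 _]].
  split; [|split]. - intros; rewrite Hg1, Hf1; auto. - intros; rewrite Hg2, Hf2; auto.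
  - exists (Kf * Kg); intro x. eapply Rle_trans; [apply HKf|]. rewrite Rmult_assoc.
    apply Rmult_le_compat_l; [lra| apply HKg].
Qed.

Lemma bl_add {X Y : CNormed} (f g : X -> Y) :
  bounded_linear f -> bounded_linear g -> bounded_linear (fun x => vadd (f x) (g x)).
Proof.
  intros Hf Hg. pose proof (lin_bound f Hf) as [Kf [Kf0 HKf]]. pose proof (lin_bound g Hg) as [Kg [Kg0 HKg]].
  destruct Hf as [Hf1 [Hf2 _]]; destruct Hg as [Hg1 [Hg2 _]].
  split; [|split].
  - intros; rewrite Hg1, Hf1. rewrite !vadd_assoc; f_equal. rewrite <- !vadd_assoc; f_equal; apply vadd_comm.
  - intros; rewrite Hg2, Hf2, vscal_addr; auto.
  - exists (Kf + Kg); intro x. eapply Rle_trans; [apply vnorm_triangle|].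
    specialize (HKf x); specialize (HKg x). lra.
Qed.

Lemma bl_opp {X Y : CNormed} (f : X -> Y) :
  bounded_linear f -> bounded_linear (fun x => vopp (f x)).
Proof.
  intros Hf. pose proof (lin_bound f Hf) as [Kf [Kf0 HKf]].
  destruct Hf as [Hf1 [Hf2 _]]. split; [|split].
  - intros; rewrite Hf1, vopp_add; auto.
  - intros; rewrite Hf2, vscal_opp; auto.
  - exists Kf; intro x. rewrite vnorm_opp; auto.
Qed.

Lemma bl_sub {X Y : CNormed} (f g : X -> Y) :
  bounded_linear f -> bounded_linear g -> bounded_linear (fun x => vadd (f x) (vopp (g x))).
Proof. intros; apply bl_add; auto; apply bl_opp; auto. Qed.

Lemma bl_id {X : CNormed} : bounded_linear (fun x : X => x).
Proof. split; [|split]; auto. exists 1; intros; lra. Qed.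

Lemma bl_zero {X Y : CNormed} : bounded_linear (fun x : X => @vzero Y).
Proof.
  split; [|split]. - intros; rewrite vadd_zero; auto. - intros; rewrite vscal_zero; auto.
  - exists 0; intros; rewrite vnorm_zero; lra.
Qed.

Lemma bl_fst {X Y : CNormed} : bounded_linear (fun p : dsum X Y => fst p).
Proof.
  split; [|split]; auto. exists 1; intros [x y]; simpl. pose proof (vnorm_nonneg y); lra.
Qed.

Lemma bl_snd {X Y : CNormed} : bounded_linear (fun p : dsum X Y => snd p).
Proof.
  split; [|split]; auto. exists 1; intros [x y]; simpl. pose proof (vnorm_nonneg x); lra.
Qed.

Lemma bl_pair {W X Y : CNormed} (f : W -> X) (g : W -> Y) :
  bounded_linear f -> bounded_linear g -> bounded_linear (fun w => ((f w, g w) : dsum X Y)).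
Proof.
  intros Hf Hg. pose proof (lin_bound f Hf) as [Kf [Kf0 HKf]]. pose proof (lin_bound g Hg) as [Kg [Kg0 HKg]].
  destruct Hf as [Hf1 [Hf2 _]]; destruct Hg as [Hg1 [Hg2 _]].
  split; [|split].
  - intros; simpl; rewrite Hf1, Hg1; auto.
  - intros; simpl; rewrite Hf2, Hg2; auto.
  - exists (Kf + Kg); intro x; simpl. specialize (HKf x); specialize (HKg x). lra.
Qed.
Inductive gexp := gA (i : nat) | gZ | gP (e1 e2 : gexp) | gN (e : gexp).

Fixpoint geval {X : CNormed} (env : list X) (e : gexp) : X :=
  match e with
  | gA i => nth i env vzero
  | gZ => vzero
  | gP e1 e2 => vadd (geval env e1) (geval env e2)
  | gN e => vopp (geval env e)
  end.

Fixpoint gcoef (e : gexp) (j : nat) : R :=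
  match e with
  | gA i => if Nat.eqb j i then 1 else 0
  | gZ => 0
  | gP e1 e2 => gcoef e1 j + gcoef e2 j
  | gN e => - gcoef e j
  end.

Fixpoint enf {X : CNormed} (c : nat -> R) (env : list X) : X :=
  match env with
  | nil => vzero
  | x :: env' => vadd (vscal (c O, 0) x) (enf (fun j => c (S j)) env')
  end.

Lemma enf_add {X : CNormed} (env : list X) : forall c1 c2,
  enf (fun j => c1 j + c2 j) env = vadd (enf c1 env) (enf c2 env).
Proof.
  induction env; intros; simpl. rewrite vadd_zero; auto.
  rewrite IHenv. rewrite vadd_4. f_equal. rewrite <- vscal_addl. unfold Cadd; simpl. f_equal. f_equal. ring.
Qed.

Lemma enf_opp {X : CNormed} (env : list X) : forall c,
  enf (fun j => - c j) env = vopp (enf c env).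
Proof.
  induction env; intros; simpl. rewrite vopp_zero; auto.
  rewrite IHenv, vopp_add. f_equal. rewrite vopp_scal, <- vscal_mul. unfold Cmul; simpl. f_equal. f_equal; ring.
Qed.

Lemma enf_zero {X : CNormed} (env : list X) : forall c, (forall j, c j = 0) -> enf c env = vzero.
Proof.
  induction env; intros c Hc; simpl; auto. rewrite IHenv; auto. rewrite Hc, vscal0, vadd_zero; auto.
Qed.

Lemma enf_atom {X : CNormed} (env : list X) : forall i,
  enf (fun j => if Nat.eqb j i then 1 else 0) env = nth i env vzero.
Proof.
  induction env; intros i; simpl. destruct i; auto.
  destruct i as [|i].
  - simpl. rewrite enf_zero by (intro j; reflexivity). rewrite vadd_zero. change (1, 0) with Cone. apply vscal_one.
  - simpl. rewrite vscal0, vadd0l. rewrite <- IHenv. reflexivity.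
Qed.

Lemma enf_ext {X : CNormed} (env : list X) : forall c1 c2,
  (forall j, (j < length env)%nat -> c1 j = c2 j) -> enf c1 env = enf c2 env.
Proof.
  induction env; intros c1 c2 H; simpl; auto. rewrite H by (simpl; lia). f_equal.
  apply IHenv. intros; apply H; simpl; lia.
Qed.

Lemma geval_enf {X : CNormed} (env : list X) e : geval env e = enf (gcoef e) env.
Proof.
  induction e; simpl.
  - rewrite <- enf_atom. reflexivity.
  - symmetry; apply enf_zero; auto.
  - rewrite IHe1, IHe2, <- enf_add. reflexivity.
  - rewrite IHe, <- enf_opp. reflexivity.
Qed.

Lemma gsound {X : CNormed} (env : list X) e1 e2 :
  (forall j, (j < length env)%nat -> gcoef e1 j = gcoef e2 j) -> geval env e1 = geval env e2.
Proof. intro H; rewrite !geval_enf; apply enf_ext; auto. Qed.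

Ltac g_inlist x l := match l with | nil => constr:(false) | cons x _ => constr:(true) | cons _ ?l' => g_inlist x l' end.
Ltac g_atoms t l :=
  match t with
  | vadd ?a ?b => let l1 := g_atoms a l in g_atoms b l1
  | vopp ?a => g_atoms a l
  | vzero => l
  | _ => match g_inlist t l with true => l | false => constr:(cons t l) end
  end.
Ltac g_idx x l := match l with cons x _ => constr:(O) | cons _ ?l' => let n := g_idx x l' in constr:(S n) end.
Ltac g_reify t l :=
  match t with
  | vadd ?a ?b => let ea := g_reify a l in let eb := g_reify b l in constr:(gP ea eb)
  | vopp ?a => let ea := g_reify a l in constr:(gN ea)
  | vzero => constr:(gZ)
  | _ => let i := g_idx t l in constr:(gA i)
  end.
Ltac gsolve :=
  match goal with |- @eq ?T ?L ?R =>
    let l0 := constr:(@nil T) in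
    let l1 := g_atoms L l0 in let l := g_atoms R l1 in
    let eL := g_reify L l in let eR := g_reify R l in
    change (geval l eL = geval l eR); apply gsound; simpl length; intros j Hj;
    repeat (first [lia | destruct j as [|j]; [simpl; lra|]])
  end.


Lemma Rdiv_le_0_compat (a b : R) : 0 <= a -> 0 < b -> 0 <= a / b.
Proof. intros; unfold Rdiv; apply Rmult_le_pos; auto; left; apply Rinv_0_lt_compat; auto. Qed.

Lemma Rlt_half_pos (e : R) : 0 < e -> 0 < e / 2.
Proof. intro; lra. Qed.

Lemma iter_lin {X : CNormed} (f : X -> X) n : bounded_linear f -> bounded_linear (fun x => Nat.iter n f x).
Proof.
  intro Hf. induction n; simpl.
  - apply bl_id.
  - apply (bl_comp f (fun x => Nat.iter n f x)); auto.
Qed.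

Lemma iter_bound {X : CNormed} (f : X -> X) K : 0 <= K -> (forall x, vnorm (f x) <= K * vnorm x) ->
  forall n x, vnorm (Nat.iter n f x) <= K ^ n * vnorm x.
Proof.
  intros HK Hf. induction n; intro x; simpl. lra.
  eapply Rle_trans; [apply Hf|]. rewrite Rmult_assoc. apply Rmult_le_compat_l; auto.
Qed.

Lemma iter_comm {X Y : CNormed} (f : X -> X) (f' : Y -> Y) (g : X -> Y) :
  (forall x, g (f x) = f' (g x)) -> forall n x, g (Nat.iter n f x) = Nat.iter n f' (g x).
Proof. intros H n; induction n; intro x; simpl; auto. rewrite H, IHn; auto. Qed.

Lemma iter_zero {X : CNormed} (f : X -> X) n : bounded_linear f -> Nat.iter n f vzero = vzero.
Proof. intro H; induction n; simpl; auto. rewrite IHn; apply lin_zero; auto. Qed.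

Lemma bl_scal {X : CNormed} (a : Cplx) : bounded_linear (fun x : X => vscal a x).
Proof.
  split; [|split].
  - intros; apply vscal_addr.
  - intros; rewrite <- !vscal_mul. f_equal. unfold Cmul; f_equal; ring.
  - exists (Cmod a); intros; rewrite vnorm_scal; lra.
Qed.

Definition conv {X : CNormed} (u : nat -> X) (l : X) : Prop :=
  forall eps, 0 < eps -> exists N, forall n, (N <= n)%nat -> vdist (u n) l < eps.

Lemma conv_unique {X : CNormed} (u : nat -> X) l l' : conv u l -> conv u l' -> l = l'.
Proof.
  intros H H'. apply vsub_eq0, vnorm0_eq.
  apply Rnot_lt_le; intro Hp.
  destruct (H _ (Rlt_half_pos _ Hp)) as [N HN]. destruct (H' _ (Rlt_half_pos _ Hp)) as [N' HN'].
  specialize (HN (max N N') (Nat.le_max_l _ _)). specialize (HN' (max N N') (Nat.le_max_r _ _)).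
  unfold vdist in *. pose proof (vnorm_triangle_sub l (u (max N N')) l').
  rewrite (vnorm_sub_sym l (u _)) in H0. lra.
Qed.

Lemma conv_add {X : CNormed} (u v : nat -> X) l m : conv u l -> conv v m -> conv (fun n => vadd (u n) (v n)) (vadd l m).
Proof.
  intros H H' eps Heps.
  destruct (H _ (Rlt_half_pos _ Heps)) as [N HN]. destruct (H' _ (Rlt_half_pos _ Heps)) as [N' HN'].
  exists (max N N'); intros n Hn. specialize (HN n ltac:(lia)); specialize (HN' n ltac:(lia)).
  unfold vdist in *.
  replace (vadd (vadd (u n) (v n)) (vopp (vadd l m))) with (vadd (vadd (u n) (vopp l)) (vadd (v n) (vopp m))).
  pose proof (vnorm_triangle (vadd (u n) (vopp l)) (vadd (v n) (vopp m))). lra.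
  rewrite vopp_add, !vadd_assoc; f_equal. rewrite <- !vadd_assoc. f_equal. apply vadd_comm.
Qed.

Lemma conv_lin {X Y : CNormed} (f : X -> Y) (u : nat -> X) l : bounded_linear f -> conv u l -> conv (fun n => f (u n)) (f l).
Proof.
  intros Hf H eps Heps. destruct (lin_bound f Hf) as [K [K0 HK]].
  destruct (H (eps / K)) as [N HN]. apply Rdiv_lt_0_compat; auto.
  exists N; intros n Hn. specialize (HN n Hn). unfold vdist in *.
  rewrite <- lin_sub; auto. eapply Rle_lt_trans; [apply HK|].
  apply Rmult_lt_compat_l with (r := K) in HN; auto. field_simplify in HN; lra.
Qed.

Lemma conv_ext {X : CNormed} (u v : nat -> X) l : (forall n, u n = v n) -> conv u l -> conv v l.
Proof. intros E H eps Heps; destruct (H eps Heps) as [N HN]; exists N; intros; rewrite <- E; auto. Qed.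

Lemma conv_shift {X : CNormed} (u : nat -> X) l : conv u l -> conv (fun n => u (S n)) l.
Proof. intros H eps Heps; destruct (H eps Heps) as [N HN]; exists N; intros; apply HN; lia. Qed.

Lemma conv_const {X : CNormed} (l : X) : conv (fun _ => l) l.
Proof. intros eps Heps; exists O; intros; unfold vdist; rewrite vadd_opp, vnorm_zero; auto. Qed.

Lemma conv_norm_le {X : CNormed} (u : nat -> X) l c : conv u l -> (forall n, vnorm (u n) <= c) -> vnorm l <= c.
Proof.
  intros H Hc. apply Rnot_lt_le; intro Hl.
  destruct (H (vnorm l - c)) as [N HN]; [lra|].
  specialize (HN N (le_n _)). unfold vdist in HN. rewrite vnorm_sub_sym in HN.
  pose proof (vnorm_triangle (vadd l (vopp (u N))) (u N)). rewrite vadd_sub_cancel' in H0.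
  specialize (Hc N). lra.
Qed.

Lemma small_zero {X : CNormed} (v : X) C r : 0 <= r < 1 -> (forall n, vnorm v <= C * r ^ n) -> v = vzero.
Proof.
  intros Hr H. apply vnorm0_eq. apply Rnot_lt_le; intro Hv.
  assert (HC : 0 < C). { specialize (H O); simpl in H; lra. }
  destruct (pow_lt_1_zero r) with (y := vnorm v / C) as [N HN].
  rewrite Rabs_right; lra. apply Rdiv_lt_0_compat; auto.
  specialize (HN N (le_n _)). specialize (H N). rewrite Rabs_right in HN by (apply Rle_ge, pow_le; lra).
  apply Rmult_lt_compat_l with (r := C) in HN; auto. field_simplify in HN; lra.
Qed.

Lemma dsum_complete (X Y : CNormed) : complete X -> complete Y -> complete (dsum X Y).
Proof.
  intros HX HY u Hu.
  destruct (HX (fun n => fst (u n))) as [lx Hx].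
  { intros eps Heps. destruct (Hu eps Heps) as [N HN]. exists N; intros m n Hm Hn.
    specialize (HN m n Hm Hn). unfold vdist in *; simpl in HN. pose proof (vnorm_nonneg (vadd (snd (u m)) (vopp (snd (u n))))). lra. }
  destruct (HY (fun n => snd (u n))) as [ly Hy].
  { intros eps Heps. destruct (Hu eps Heps) as [N HN]. exists N; intros m n Hm Hn.
    specialize (HN m n Hm Hn). unfold vdist in *; simpl in HN. pose proof (vnorm_nonneg (vadd (fst (u m)) (vopp (fst (u n))))). lra. }
  exists (lx, ly). intros eps Heps.
  destruct (Hx _ (Rlt_half_pos _ Heps)) as [N HN]. destruct (Hy _ (Rlt_half_pos _ Heps)) as [N' HN'].
  exists (max N N'); intros n Hn. specialize (HN n ltac:(lia)); specialize (HN' n ltac:(lia)).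
  unfold vdist in *; simpl. lra.
Qed.
Definition qn {X : CNormed} (a : X -> X) : Prop :=
  forall eps, 0 < eps -> exists C, 0 <= C /\ forall n x, vnorm (Nat.iter n a x) <= C * eps ^ n * vnorm x.

Lemma qn_of_qnil {X : CNormed} (a : X -> X) : bounded_linear a -> quasinilpotent a -> qn a.
Proof.
  intros Ha Hq eps Heps. destruct (Hq eps Heps) as [N HN].
  destruct (lin_bound a Ha) as [K [K0 HK]].
  set (M := Rmax 1 (K / eps)).
  assert (M1 : 1 <= M) by apply Rmax_l.
  exists (M ^ N). split. apply pow_le; lra.
  intros n x. pose proof (vnorm_nonneg x) as Hx.
  assert (HMN : 1 <= M ^ N) by (apply pow_R1_Rle; auto).
  destruct (Compare_dec.le_lt_dec N n) as [Hn|Hn].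
  - eapply Rle_trans; [apply HN; auto|]. apply Rmult_le_compat_r; auto.
    assert (0 <= eps ^ n) by (apply pow_le; lra). nra.
  - eapply Rle_trans; [apply (iter_bound a K); [lra|apply HK]|]. apply Rmult_le_compat_r; auto.
    replace K with (K / eps * eps) at 1 by (field; lra). rewrite Rpow_mult_distr.
    apply Rmult_le_compat_r. apply pow_le; lra.
    apply Rle_trans with (M ^ n). apply pow_incr. split. apply Rdiv_le_0_compat; lra. apply Rmax_r.
    apply Rle_pow; auto; lia.
Qed.

Lemma qnil_of_qn {X : CNormed} (a : X -> X) : qn a -> quasinilpotent a.
Proof.
  intros Hq eps Heps. destruct (Hq (eps / 2)) as [C [C0 HC]]; [lra|].
  destruct (pow_lt_1_zero (/2)) with (y := / (C + 1)) as [N HN].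
  rewrite Rabs_right; lra. apply Rinv_0_lt_compat; lra.
  exists N. intros n Hn x. eapply Rle_trans; [apply HC|].
  apply Rmult_le_compat_r; [apply vnorm_nonneg|].
  specialize (HN n Hn). rewrite Rabs_right in HN by (apply Rle_ge, pow_le; lra).
  replace (eps / 2) with (/2 * eps) by field. rewrite Rpow_mult_distr, <- Rmult_assoc.
  rewrite <- (Rmult_1_l (eps ^ n)) at 2. apply Rmult_le_compat_r. apply pow_le; lra.
  apply Rmult_lt_compat_l with (r := C + 1) in HN; [|lra].
  rewrite Rinv_r in HN by lra. pose proof (pow_le (/2) n ltac:(lra)). nra.
Qed.

Lemma iter_double {X : Type} (f : X -> X) n x : Nat.iter n (fun y => f (f y)) x = Nat.iter (n + n) f x.
Proof.
  induction n; simpl; auto. rewrite IHn. replace (n + S n)%nat with (S (n + n)) by lia. reflexivity.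
Qed.

Lemma qn_sq {X : CNormed} (q : X -> X) : qn q -> qn (fun x => q (q x)).
Proof.
  intros Hq eps Heps. destruct (Hq (Rmin eps 1)) as [C [C0 HC]].
  apply Rmin_glb_lt; lra.
  exists C; split; auto. intros n x. rewrite iter_double. eapply Rle_trans; [apply HC|].
  apply Rmult_le_compat_r; [apply vnorm_nonneg|]. apply Rmult_le_compat_l; auto.
  rewrite pow_add, <- Rpow_mult_distr. apply pow_incr. split.
  assert (0 < Rmin eps 1) by (apply Rmin_glb_lt; lra). nra.
  pose proof (Rmin_l eps 1); pose proof (Rmin_r eps 1). assert (0 < Rmin eps 1) by (apply Rmin_glb_lt; lra). nra.
Qed.

Lemma qn_sqrt {X : CNormed} (q : X -> X) : bounded_linear q -> qn (fun x => q (q x)) -> qn q.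
Proof.
  intros Hl Hq eps Heps. destruct (Hq (eps * eps)) as [C [C0 HC]]. nra.
  destruct (lin_bound q Hl) as [K [K0 HK]].
  exists (C * Rmax 1 (K / eps)). split. apply Rmult_le_pos; auto. pose proof (Rmax_l 1 (K / eps)); lra.
  intros n x. pose proof (vnorm_nonneg x) as Hx. pose proof (Rmax_l 1 (K / eps)). pose proof (Rmax_r 1 (K / eps)).
  destruct (Nat.Even_or_Odd n) as [[m Hm]|[m Hm]]; subst n.
  - replace (2 * m)%nat with (m + m)%nat by lia. rewrite <- iter_double.
    eapply Rle_trans; [apply HC|]. rewrite pow_add, <- Rpow_mult_distr.
    apply Rmult_le_compat_r; auto. assert (0 <= (eps * eps) ^ m) by (apply pow_le; nra).
    assert (0 <= C * (eps * eps) ^ m) by (apply Rmult_le_pos; auto). nra.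
  - replace (2 * m + 1)%nat with (S (m + m))%nat by lia. rewrite Nat.iter_succ_r, <- iter_double.
    assert (Hp : 0 <= (eps * eps) ^ m) by (apply pow_le; nra).
    eapply Rle_trans; [apply HC|]. eapply Rle_trans. apply Rmult_le_compat_l. apply Rmult_le_pos; auto. apply HK.
    simpl. rewrite pow_add, <- Rpow_mult_distr.
    replace (C * (eps * eps) ^ m * (K * vnorm x)) with (C * (K / eps) * (eps * (eps * eps) ^ m) * vnorm x) by (field; lra).
    apply Rmult_le_compat_r; auto. apply Rmult_le_compat_r. apply Rmult_le_pos; [lra| apply pow_le; nra].
    apply Rmult_le_compat_l; auto.
Qed.

Lemma qnil_nil {X : CNormed} (a : X -> X) k : bounded_linear a -> (forall x, Nat.iter k a x = vzero) -> quasinilpotent a.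
Proof.
  intros Ha Hk eps Heps. exists k. intros n Hn x.
  replace n with ((n - k) + k)%nat by lia. rewrite Nat.iter_add, Hk, iter_zero, vnorm_zero; auto.
  apply Rmult_le_pos; [apply pow_le; lra| apply vnorm_nonneg].
Qed.

Lemma INR_le_pow2 n : INR n <= 2 ^ n.
Proof.
  induction n. simpl; lra. rewrite S_INR. simpl. assert (1 <= 2 ^ n) by (apply pow_R1_Rle; lra). lra.
Qed.

Definition lowT {X Y : CNormed} (a : X -> X) (c : X -> Y) (d : Y -> Y) : dsum X Y -> dsum X Y :=
  fun p => (a (fst p), vadd (c (fst p)) (d (snd p))).

Lemma bl_lowT {X Y : CNormed} (a : X -> X) (c : X -> Y) (d : Y -> Y) :
  bounded_linear a -> bounded_linear c -> bounded_linear d -> bounded_linear (lowT a c d).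
Proof.
  intros. unfold lowT. apply bl_pair. apply (bl_comp a (fun p : dsum X Y => fst p)); auto; apply bl_fst.
  apply bl_add. apply (bl_comp c (fun p : dsum X Y => fst p)); auto; apply bl_fst.
  apply (bl_comp d (fun p : dsum X Y => snd p)); auto; apply bl_snd.
Qed.

Lemma qn_lowT {X Y : CNormed} (a : X -> X) (c : X -> Y) (d : Y -> Y) :
  bounded_linear a -> bounded_linear c -> bounded_linear d -> qn a -> qn d -> qn (lowT a c d).
Proof.
  intros Ha Hc Hd Hqa Hqd. set (T := lowT a c d).
  assert (HT : bounded_linear T) by (apply bl_lowT; auto).
  assert (Hfst : forall n p, fst (Nat.iter n T p) = Nat.iter n a (fst p)).
  { induction n; intros; simpl; auto. rewrite IHn; auto. }
  assert (Hsplit : forall n x y, Nat.iter n T ((x, y) : dsum X Y) = vadd (Nat.iter n T (x, vzero)) (Nat.iter n T (vzero, y))).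
  { intros. rewrite <- lin_add; [|apply iter_lin; auto]. f_equal. simpl. rewrite vadd_zero, vadd0l; auto. }
  assert (H0y : forall n y, Nat.iter n T ((vzero, y) : dsum X Y) = (vzero, Nat.iter n d y)).
  { induction n; intros; simpl; auto. rewrite IHn. unfold T, lowT; simpl. rewrite !lin_zero, vadd0l; auto. }
  set (g := fun n x => snd (Nat.iter n T ((x, vzero) : dsum X Y))).
  assert (Hg : forall n x, g (S n) x = vadd (g n (a x)) (Nat.iter n d (c x))).
  { intros. unfold g. rewrite Nat.iter_succ_r. unfold T at 2, lowT; simpl. rewrite (lin_zero d), vadd_zero; auto.
    rewrite Hsplit, H0y. reflexivity. }
  intros eps Heps. set (δ := eps / 2).
  destruct (Hqa δ) as [C1 [C10 HC1]]. unfold δ; lra.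
  destruct (Hqd δ) as [C2 [C20 HC2]]. unfold δ; lra.
  destruct (lin_bound c Hc) as [K [K0 HK]].
  assert (Hgb : forall n m x, vnorm (g n (Nat.iter m a x)) * δ <= INR n * K * C1 * C2 * δ ^ (n + m) * vnorm x).
  { induction n; intros m x.
    - unfold g; simpl. rewrite vnorm_zero. simpl. pose proof (vnorm_nonneg x). nra.
    - rewrite Hg. eapply Rle_trans. apply Rmult_le_compat_r. unfold δ; lra. apply vnorm_triangle.
      rewrite Rmult_plus_distr_r. specialize (IHn (S m) x). simpl Nat.iter in IHn.
      replace (n + S m)%nat with (S n + m)%nat in IHn by lia.
      assert (H2 : vnorm (Nat.iter n d (c (Nat.iter m a x))) * δ <= K * C1 * C2 * δ ^ (S n + m) * vnorm x).
      { eapply Rle_trans. apply Rmult_le_compat_r. unfold δ; lra. apply HC2.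
        eapply Rle_trans. apply Rmult_le_compat_r. unfold δ; lra. apply Rmult_le_compat_l.
        apply Rmult_le_pos; auto; apply pow_le; unfold δ; lra. apply HK.
        eapply Rle_trans. apply Rmult_le_compat_r. unfold δ; lra. apply Rmult_le_compat_l.
        apply Rmult_le_pos; auto; apply pow_le; unfold δ; lra. apply Rmult_le_compat_l. lra. apply HC1.
        rewrite pow_add. simpl. right; ring. }
      rewrite S_INR. lra. }
  exists (C1 + C2 + K * C1 * C2 / δ). split.
  { assert (0 < δ) by (unfold δ; lra). assert (0 <= K * C1 * C2 / δ). apply Rdiv_le_0_compat; auto. apply Rmult_le_pos; auto. nra. lra. }
  intros n [x y]. simpl vnorm at 1.
  rewrite Hfst, Hsplit, H0y. simpl.
  fold (g n x).
  assert (Hdn : δ ^ n <= eps ^ n). { apply pow_incr; unfold δ; lra. }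
  assert (Hd0 : 0 <= δ ^ n). { apply pow_le; unfold δ; lra. }
  assert (Hx : 0 <= vnorm x) by apply vnorm_nonneg. assert (Hy : 0 <= vnorm y) by apply vnorm_nonneg.
  assert (E1 : vnorm (Nat.iter n a x) <= C1 * eps ^ n * vnorm x).
  { eapply Rle_trans; [apply HC1|]. apply Rmult_le_compat_r; auto. apply Rmult_le_compat_l; auto. }
  assert (E2 : vnorm (Nat.iter n d y) <= C2 * eps ^ n * vnorm y).
  { eapply Rle_trans; [apply HC2|]. apply Rmult_le_compat_r; auto. apply Rmult_le_compat_l; auto. }
  assert (E3 : vnorm (g n x) <= K * C1 * C2 / δ * eps ^ n * vnorm x).
  { specialize (Hgb n O x). simpl Nat.iter in Hgb. rewrite Nat.add_0_r in Hgb.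
    assert (Hn : INR n * δ ^ n <= eps ^ n).
    { unfold δ. replace (eps / 2) with (/2 * eps) by field. rewrite Rpow_mult_distr, <- Rmult_assoc.
      rewrite <- (Rmult_1_l (eps ^ n)) at 2. apply Rmult_le_compat_r. apply pow_le; lra.
      rewrite pow_inv. pose proof (INR_le_pow2 n). pose proof (pow_lt 2 n ltac:(lra)).
      apply (Rmult_le_reg_r (2 ^ n)); auto. rewrite Rmult_assoc, Rinv_l by lra. lra. }
    assert (0 < δ) by (unfold δ; lra).
    apply (Rmult_le_reg_r δ); auto. eapply Rle_trans; [apply Hgb|].
    replace (K * C1 * C2 / δ * eps ^ n * vnorm x * δ) with (K * C1 * C2 * eps ^ n * vnorm x) by (field; lra).
    replace (INR n * K * C1 * C2 * δ ^ n * vnorm x) with ((K * C1 * C2) * (INR n * δ ^ n) * vnorm x) by ring.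
    apply Rmult_le_compat_r; auto. apply Rmult_le_compat_l; auto. apply Rmult_le_pos; auto. apply Rmult_le_pos; auto. lra. }
  pose proof (vnorm_triangle (g n x) (Nat.iter n d y)).
  assert (0 <= K * C1 * C2 / δ * eps ^ n). { apply Rmult_le_pos. apply Rdiv_le_0_compat. apply Rmult_le_pos; [apply Rmult_le_pos|]; lra. unfold δ; lra. apply pow_le; lra. }
  assert (0 <= eps ^ n) by (apply pow_le; lra).
  assert (0 <= C2 * eps ^ n * vnorm x) by (apply Rmult_le_pos; [apply Rmult_le_pos|]; lra).
  assert (0 <= C1 * eps ^ n * vnorm y) by (apply Rmult_le_pos; [apply Rmult_le_pos|]; lra).
  assert (0 <= K * C1 * C2 / δ * eps ^ n * vnorm y) by (apply Rmult_le_pos; lra).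
  match goal with |- _ <= ?A => replace A with (C1 * eps ^ n * vnorm x + C2 * eps ^ n * vnorm x + K * C1 * C2 / δ * eps ^ n * vnorm x + C1 * eps ^ n * vnorm y + C2 * eps ^ n * vnorm y + K * C1 * C2 / δ * eps ^ n * vnorm y) by ring end.
  change (snd (Nat.iter n T (x, vzero))) with (g n x). lra.
Qed.
Fixpoint psum {X Y : CNormed} (t : nat -> X -> Y) (n : nat) (x : X) : Y :=
  match n with O => vzero | S n => vadd (psum t n x) (t n x) end.

Lemma psum_add {X Y : CNormed} (t : nat -> X -> Y) n x y :
  (forall n, bounded_linear (t n)) -> psum t n (vadd x y) = vadd (psum t n x) (psum t n y).
Proof.
  intros Ht. induction n; simpl. rewrite vadd_zero; auto.
  rewrite IHn, lin_add; auto. apply vadd_4.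
Qed.

Lemma psum_scal {X Y : CNormed} (t : nat -> X -> Y) n a x :
  (forall n, bounded_linear (t n)) -> psum t n (vscal a x) = vscal a (psum t n x).
Proof.
  intros Ht. induction n; simpl. rewrite vscal_zero; auto.
  rewrite IHn, vscal_addr. f_equal. destruct (Ht n) as [_ [H _]]; auto.
Qed.

Lemma series_exists {X Y : CNormed} (HY : complete Y) (t : nat -> X -> Y) K :
  (forall n, bounded_linear (t n)) -> 0 <= K -> (forall n x, vnorm (t n x) <= K * (/2) ^ n * vnorm x) ->
  exists s : X -> Y, bounded_linear s /\ forall x, conv (fun n => psum t n x) (s x).
Proof.
  intros Ht K0 HK.
  assert (Hd : forall n k x, vnorm (vadd (psum t (n + k) x) (vopp (psum t n x))) <= K * vnorm x * (2 * (/2) ^ n - 2 * (/2) ^ (n + k))).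
  { intros n k x. induction k.
    - rewrite Nat.add_0_r, vadd_opp, vnorm_zero. right; ring.
    - replace (n + S k)%nat with (S (n + k)) by lia. simpl psum.
      replace (vadd (vadd (psum t (n + k) x) (t (n + k)%nat x)) (vopp (psum t n x)))
        with (vadd (vadd (psum t (n + k) x) (vopp (psum t n x))) (t (n + k)%nat x)).
      2:{ rewrite <- !vadd_assoc. f_equal. apply vadd_comm. }
      eapply Rle_trans; [apply vnorm_triangle|]. specialize (HK (n + k)%nat x).
      replace (K * vnorm x * (2 * (/ 2) ^ n - 2 * (/ 2) ^ S (n + k))) with
        (K * vnorm x * (2 * (/ 2) ^ n - 2 * (/ 2) ^ (n + k)) + K * (/ 2) ^ (n + k) * vnorm x) by (simpl; field).
      lra. }
  assert (Hb : forall n x, vnorm (psum t n x) <= 2 * K * vnorm x).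
  { intros n x. specialize (Hd O n x). simpl in Hd. rewrite vopp_zero, vadd_zero in Hd.
    eapply Rle_trans; [apply Hd|]. pose proof (pow_le (/2) n ltac:(lra)). pose proof (vnorm_nonneg x).
    assert (0 <= K * vnorm x) by (apply Rmult_le_pos; auto). nra. }
  assert (Hc : forall x, exists l, conv (fun n => psum t n x) l).
  { intro x. apply HY. intros eps Heps.
    destruct (pow_lt_1_zero (/2)) with (y := eps / (2 * K * vnorm x + 1)) as [N HN].
    rewrite Rabs_right; lra. apply Rdiv_lt_0_compat; auto. pose proof (vnorm_nonneg x). assert (0 <= K * vnorm x) by (apply Rmult_le_pos; auto). lra.
    assert (Hm : forall m n, (N <= n)%nat -> (n <= m)%nat -> vdist (psum t m x) (psum t n x) < eps).
    { intros m n Hn Hnm. replace m with (n + (m - n))%nat by lia. unfold vdist.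
      eapply Rle_lt_trans; [apply Hd|]. specialize (HN n Hn). rewrite Rabs_right in HN by (apply Rle_ge, pow_le; lra).
      pose proof (pow_le (/2) (n + (m - n)) ltac:(lra)). pose proof (vnorm_nonneg x).
      assert (0 <= K * vnorm x) by (apply Rmult_le_pos; auto).
      apply Rle_lt_trans with (K * vnorm x * (2 * (/ 2) ^ n)). nra.
      apply Rmult_lt_compat_r with (r := 2 * K * vnorm x + 1) in HN; [|lra].
      replace (eps / (2 * K * vnorm x + 1) * (2 * K * vnorm x + 1)) with eps in HN by (field; lra).
      pose proof (pow_le (/2) n ltac:(lra)). nra. }
    exists N. intros m n Hm' Hn'. destruct (Nat.le_ge_cases n m).
    - apply Hm; auto.
    - unfold vdist; rewrite vnorm_sub_sym; apply Hm; auto. }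
  set (s := fun x => proj1_sig (constructive_indefinite_description _ (Hc x))).
  assert (Hs : forall x, conv (fun n => psum t n x) (s x)).
  { intro x. unfold s. destruct (constructive_indefinite_description _ (Hc x)); auto. }
  exists s. split; auto. split; [|split].
  - intros x y. eapply conv_unique. apply Hs.
    eapply conv_ext; [|apply conv_add; [apply (Hs x)|apply (Hs y)]]. intro n; simpl. rewrite psum_add; auto.
  - intros a x. eapply conv_unique. apply Hs.
    eapply conv_ext; [|apply (conv_lin (fun v => vscal a v)); [apply bl_scal|apply (Hs x)]].
    intro n; simpl. rewrite psum_scal; auto.
  - exists (2 * K). intro x. eapply conv_norm_le; [apply Hs|]. intro; apply Hb.
Qed.

Lemma psum_tele {X Y : CNormed} (U : Y -> Y) (W : X -> Y) (V : X -> X) n x :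
  bounded_linear U ->
  psum (fun n x => Nat.iter n U (W (Nat.iter n V x))) (S n) x =
  vadd (W x) (U (psum (fun n x => Nat.iter n U (W (Nat.iter n V x))) n (V x))).
Proof.
  intros HU. induction n.
  - simpl. rewrite vadd0l, lin_zero, vadd_zero; auto.
  - change (psum (fun n x => Nat.iter n U (W (Nat.iter n V x))) (S (S n)) x) with
      (vadd (psum (fun n x => Nat.iter n U (W (Nat.iter n V x))) (S n) x) (Nat.iter (S n) U (W (Nat.iter (S n) V x)))).
    rewrite IHn. simpl psum at 2. rewrite lin_add, vadd_assoc; auto. f_equal.
    rewrite (Nat.iter_succ_r n _ V). reflexivity.
Qed.

Lemma series_tele {X Y : CNormed} (U : Y -> Y) (W : X -> Y) (V : X -> X) (s : X -> Y) :
  bounded_linear U ->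
  (forall x, conv (fun n => psum (fun n x => Nat.iter n U (W (Nat.iter n V x))) n x) (s x)) ->
  forall x, s x = vadd (W x) (U (s (V x))).
Proof.
  intros HU Hs x. eapply conv_unique. apply conv_shift, (Hs x).
  eapply conv_ext; [|apply conv_add; [apply conv_const|apply conv_lin; [apply HU| apply (Hs (V x))]]].
  intro n; cbv beta. rewrite (psum_tele U W V n x HU). reflexivity.
Qed.

Lemma series_left {X Y : CNormed} (t : nat -> X -> Y) (s : X -> Y) (L : Y -> Y) :
  bounded_linear L -> (forall x, conv (fun n => psum t n x) (s x)) ->
  (forall n x, L (t n x) = t n x) -> forall x, L (s x) = s x.
Proof.
  intros HL Hs Ht x. eapply conv_unique; [apply conv_lin; [apply HL|apply Hs]|].
  eapply conv_ext; [|apply Hs]. intro n; simpl. symmetry. induction n; simpl.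
  rewrite lin_zero; auto. rewrite lin_add, IHn, Ht; auto.
Qed.

Lemma series_right {X Y : CNormed} (t : nat -> X -> Y) (s : X -> Y) (R : X -> X) :
  (forall x, conv (fun n => psum t n x) (s x)) ->
  (forall n x, t n (R x) = t n x) -> forall x, s (R x) = s x.
Proof.
  intros Hs Ht x. eapply conv_unique; [apply Hs|].
  eapply conv_ext; [|apply Hs]. intro n; simpl. induction n; simpl; auto. rewrite IHn, Ht; auto.
Qed.
Lemma gD_ext {X : CNormed} (f g : X -> X) : has_gDrazin f -> (forall x, f x = g x) -> has_gDrazin g.
Proof. intros H E. replace g with f; auto. apply functional_extensionality; auto. Qed.

Lemma qnil_ext {X : CNormed} (f g : X -> X) : quasinilpotent f -> (forall x, f x = g x) -> quasinilpotent g.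
Proof. intros H E. replace g with f; auto. apply functional_extensionality; auto. Qed.

Lemma qn_ext {X : CNormed} (f g : X -> X) : qn f -> (forall x, f x = g x) -> qn g.
Proof. intros H E. replace g with f; auto. apply functional_extensionality; auto. Qed.

Lemma gD_qnil {X : CNormed} (a : X -> X) : bounded_linear a -> quasinilpotent a -> has_gDrazin a.
Proof.
  intros Ha Hq. split; auto. exists (fun _ => vzero). split; [apply bl_zero|]. split; [|split].
  - auto. - intros; apply lin_zero; auto.
  - eapply qnil_ext; [apply Hq|]. intro x; simpl. rewrite !(lin_zero a), vopp_zero, vadd_zero; auto.
Qed.

Lemma gD_nil {X : CNormed} (a : X -> X) k : bounded_linear a -> (forall x, Nat.iter k a x = vzero) -> has_gDrazin a.
Proof. intros; apply gD_qnil; auto; eapply qnil_nil; eauto. Qed.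

Lemma bl_ab {X : CNormed} (a b : X -> X) : bounded_linear a -> bounded_linear b -> bounded_linear (fun v => a (b v)).
Proof. intros; apply (bl_comp a b); auto. Qed.

Definition pid {X : CNormed} (a b : X -> X) (v : X) : X := vadd v (vopp (a (b v))).

Lemma gD_q {X : CNormed} (a b : X -> X) : bounded_linear a -> bounded_linear b ->
  quasinilpotent (fun v => vadd (a v) (vopp (a (a (b v))))) ->
  qn (fun v => a (pid a b v)).
Proof.
  intros Ha Hb Hq. unfold pid. eapply qn_ext. apply qn_of_qnil; [|apply Hq].
  apply bl_sub; auto. apply bl_ab; auto. apply bl_ab; auto.
  intro x; simpl. rewrite lin_sub; auto.
Qed.

Lemma iter_conj {W Z : Type} (F : W -> Z) (G : Z -> W) n z :
  Nat.iter (S n) (fun z => F (G z)) z = F (Nat.iter n (fun y => G (F y)) (G z)).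
Proof. induction n; simpl; auto. simpl in IHn. rewrite IHn; auto. Qed.

Lemma commutant {X : CNormed} (a b s : X -> X) :
  bounded_linear a -> bounded_linear b -> bounded_linear s ->
  (forall v, b (a (b v)) = b v) -> (forall v, a (b v) = b (a v)) ->
  quasinilpotent (fun v => vadd (a v) (vopp (a (a (b v))))) ->
  (forall v, s (a v) = a (s v)) -> forall v, s (b v) = b (s v).
Proof.
  intros Ha Hb Hs H1 H2 Hq Hsa.
  set (p := fun v => vadd v (vopp (a (b v)))).
  set (q := fun v => a (p v)).
  assert (Hqn : qn q) by (apply gD_q; auto).
  assert (Hp : bounded_linear p) by (apply bl_sub; [apply bl_id| apply bl_ab; auto]).
  assert (Hqb : bounded_linear q) by (unfold q; apply (bl_comp a p); auto).
  assert (Hpa : forall v, p (a v) = a (p v)).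
  { intro v; unfold p. rewrite (lin_sub a); auto. rewrite <- (H2 v). reflexivity. }
  assert (Hpp : forall w, p (p w) = p w).
  { intro w. unfold p. rewrite (lin_sub b), (lin_sub a), H1, vadd_opp, vopp_zero, vadd_zero; auto. }
  assert (Hqq : forall w, q (q w) = q (a w)).
  { intro w; unfold q. rewrite (Hpa (p w)), Hpp, (Hpa w). reflexivity. }
  assert (Haq : forall y, a (q y) = q (a y)).
  { intro y; unfold q; rewrite Hpa; reflexivity. }
  assert (Hba : forall n x, a (Nat.iter n b x) = Nat.iter n b (a x)).
  { apply iter_comm; auto. }
  assert (Hbs : forall n z, Nat.iter (S n) b z = Nat.iter (S (S n)) b (a z)).
  { intros n z. rewrite !Nat.iter_succ_r. rewrite <- (H2 z), H1. reflexivity. }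
  destruct (lin_bound b Hb) as [Kb [Kb0 HKb]]. destruct (lin_bound s Hs) as [Ks [Ks0 HKs]].
  destruct (Hqn (/ (2 * Kb))) as [C [C0 HC]]. apply Rinv_0_lt_compat; lra.
  assert (Hpow : forall n, (/ (2 * Kb)) ^ n * Kb ^ n = (/2) ^ n).
  { intro n. rewrite <- Rpow_mult_distr. f_equal. field. lra. }
  assert (HU : forall x, p (s (a (b x))) = vzero).
  { intro x. assert (Hn : forall n, p (s (a (b x))) = Nat.iter (S n) q (s (Nat.iter (S n) b x))).
    { induction n.
      - simpl. unfold q. rewrite Hsa, Hpa. reflexivity.
      - rewrite IHn. rewrite (Hbs n x), <- Hba, Hsa. rewrite Nat.iter_succ_r. rewrite <- Hqq.
        rewrite <- Nat.iter_succ_r, <- Nat.iter_succ_r. reflexivity. }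
    apply (small_zero _ (C * Ks * vnorm x) (/2)). lra.
    intro n. rewrite (Hn n). eapply Rle_trans; [apply HC|].
    pose proof (pow_le (/ (2 * Kb)) (S n) ltac:(left; apply Rinv_0_lt_compat; lra)).
    eapply Rle_trans. apply Rmult_le_compat_l. apply Rmult_le_pos; auto. apply HKs.
    eapply Rle_trans. apply Rmult_le_compat_l. apply Rmult_le_pos; auto. apply Rmult_le_compat_l. lra. apply (iter_bound b Kb); auto; lra.
    specialize (Hpow (S n)). simpl in Hpow |- *.
    pose proof (pow_le (/2) n ltac:(lra)). pose proof (vnorm_nonneg x).
    replace (C * (/ (2 * Kb) * (/ (2 * Kb)) ^ n) * (Ks * (Kb * Kb ^ n * vnorm x))) with
      (C * Ks * vnorm x * (/ 2 * (/ 2) ^ n)) by (rewrite <- Hpow; ring).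
    assert (0 <= C * Ks * vnorm x) by (apply Rmult_le_pos; [apply Rmult_le_pos|]; lra). nra. }
  assert (HW : forall x, a (b (s (p x))) = vzero).
  { intro x. assert (Hn : forall n, a (b (s (p x))) = Nat.iter (S n) b (s (Nat.iter (S n) q x))).
    { induction n.
      - cbn. unfold q. rewrite Hsa, H2. reflexivity.
      - rewrite IHn. rewrite (Hbs n), <- Hsa. f_equal. f_equal.
        change (a (q (Nat.iter n q x)) = q (q (Nat.iter n q x))).
        rewrite Hqq, Haq. reflexivity. }
    apply (small_zero _ (C * Ks * vnorm x) (/2)). lra.
    intro n. rewrite (Hn n). eapply Rle_trans; [apply (iter_bound b Kb); [lra|apply HKb]|].
    pose proof (pow_le (/ (2 * Kb)) (S n) ltac:(left; apply Rinv_0_lt_compat; lra)).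
    pose proof (pow_le Kb (S n) ltac:(lra)).
    assert (E1 := HKs (Nat.iter (S n) q x)). assert (E2 := HC (S n) x).
    apply Rle_trans with (Kb ^ S n * (Ks * (C * (/ (2 * Kb)) ^ S n * vnorm x))).
    { apply Rmult_le_compat_l; auto. eapply Rle_trans; [apply E1|]. apply Rmult_le_compat_l; lra. }
    specialize (Hpow (S n)). simpl in Hpow |- *.
    pose proof (pow_le (/2) n ltac:(lra)). pose proof (vnorm_nonneg x).
    replace (Kb * Kb ^ n * (Ks * (C * (/ (2 * Kb) * (/ (2 * Kb)) ^ n) * vnorm x))) with
      (C * Ks * vnorm x * (/ 2 * (/ 2) ^ n)) by (rewrite <- Hpow; ring).
    assert (0 <= C * Ks * vnorm x) by (apply Rmult_le_pos; [apply Rmult_le_pos|]; lra). nra. }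
  assert (Hse : forall x, s (a (b x)) = a (b (s x))).
  { intro x. 
    assert (E1 : s (a (b x)) = a (b (s (a (b x))))).
    { apply vsub_eq0. apply (HU x). }
    assert (E2 : a (b (s x)) = a (b (s (a (b x))))).
    { apply vsub_eq0. rewrite <- (HW x). unfold p. rewrite !lin_sub; auto. }
    rewrite E1, E2; auto. }
  intro v. symmetry.
  rewrite <- (H1 (s v)). rewrite <- (Hse v). rewrite (Hsa (b v)). rewrite <- (H2 (s (b v))).
  rewrite <- (Hse (b v)). rewrite (H2 (b v)), H1. reflexivity.
Qed.
Lemma spec_p {X : CNormed} (a b : X -> X) : bounded_linear a -> bounded_linear b ->
  (forall v, b (a (b v)) = b v) -> (forall v, a (b v) = b (a v)) ->
  bounded_linear (pid a b) /\ (forall v, pid a b (a v) = a (pid a b v)) /\ (forall v, pid a b (pid a b v) = pid a b v).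
Proof.
  intros Ha Hb H1 H2. set (p := pid a b). split; [|split].
  - apply bl_sub; [apply bl_id| apply bl_ab; auto].
  - intro v; unfold p, pid. rewrite (lin_sub a); auto. rewrite <- (H2 v). reflexivity.
  - intro w. unfold p, pid. rewrite (lin_sub b), (lin_sub a), H1, vadd_opp, vopp_zero, vadd_zero; auto.
Qed.

Lemma gD_sq {X : CNormed} (a : X -> X) : has_gDrazin a -> has_gDrazin (fun v => a (a v)).
Proof.
  intros [Ha [b [Hb [H1 [H2 Hq]]]]].
  destruct (spec_p a b Ha Hb H1 H2) as [Hp [Hpa Hpp]].
  set (p := pid a b) in *.
  split; [apply bl_ab; auto|]. exists (fun v => b (b v)). split; [apply bl_ab; auto|]. split; [|split].
  - intro v. rewrite (H2 (b v)), (H1 (a (b v))), (H1 v). reflexivity.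
  - intro v. rewrite !H2. reflexivity.
  - apply qnil_of_qn. assert (Hqn : qn (fun v => a (p v))) by (apply gD_q; auto).
    eapply qn_ext. apply (qn_sq _ Hqn). intro v. cbv beta.
    rewrite (Hpa (p v)), Hpp. unfold p, pid. rewrite !(lin_sub a); auto.
    rewrite (H2 (b v)), (H1 v). reflexivity.
Qed.

Lemma gD_sqrt {X : CNormed} (a : X -> X) : bounded_linear a -> has_gDrazin (fun v => a (a v)) -> has_gDrazin a.
Proof.
  intros Ha [Haa [b [Hb [H1 [H2 Hq]]]]].
  assert (Hab : forall v, a (b v) = b (a v)).
  { apply (commutant (fun v => a (a v)) b a); auto. }
  split; auto. exists (fun v => a (b v)). split; [apply bl_ab; auto|]. split; [|split].
  - intro v. rewrite H1. reflexivity.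
  - intro v. rewrite (Hab v). reflexivity.
  - destruct (spec_p (fun v => a (a v)) b Haa Hb H1 H2) as [Hp [Hpa Hpp]].
    set (p := pid (fun v => a (a v)) b) in *.
    assert (Hpa1 : forall v, p (a v) = a (p v)).
    { intro v; unfold p, pid. rewrite (lin_sub a); auto. rewrite <- (Hab v). reflexivity. }
    assert (Hqn : qn (fun v => a (a (p v)))) by (apply (gD_q (fun v => a (a v)) b); auto).
    assert (Hqb : bounded_linear (fun v => a (p v))) by (apply bl_ab; auto).
    apply qnil_of_qn. eapply qn_ext. apply (qn_sqrt _ Hqb).
    eapply qn_ext. apply Hqn. intro v; cbv beta. rewrite (Hpa1 (p v)), Hpp. reflexivity.
    intro v; unfold p, pid. rewrite (lin_sub a); auto.
Qed.

Lemma cline {W Z : CNormed} (u : W -> Z) (v : Z -> W) :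
  bounded_linear u -> bounded_linear v -> has_gDrazin (fun x => v (u x)) -> has_gDrazin (fun z => u (v z)).
Proof.
  intros Hu Hv [Hw [b [Hb [H1 [H2 Hq]]]]]. cbv beta in H1, H2, Hq.
  split; [apply (bl_comp u v); auto|]. exists (fun z => u (b (b (v z)))).
  split; [apply (bl_comp u); auto; apply (bl_comp b); auto; apply (bl_comp b); auto|]. split; [|split].
  - intro z. rewrite (H2 (b (v z))), (H1 (v (u (b (v z))))), (H1 (v z)). reflexivity.
  - intro z. rewrite (H2 (b (v z))), (H2 (v z)). reflexivity.
  - destruct (spec_p (fun x => v (u x)) b Hw Hb H1 H2) as [Hp [Hpa Hpp]].
    set (p := pid (fun x => v (u x)) b) in *.
    assert (Hqn : qn (fun y => v (u (p y)))) by (apply (gD_q (fun x => v (u x)) b); auto).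
    assert (Hqn' : qn (fun y => p (v (u y)))).
    { eapply qn_ext; [apply Hqn|]. intro y; cbv beta. rewrite Hpa; auto. }
    apply qnil_of_qn.
    assert (E : forall z, u (p (v z)) = vadd (u (v z)) (vopp (u (v (u (v (u (b (b (v z)))))))))).
    { intro z. unfold p, pid. rewrite (lin_sub u); auto. rewrite (H2 (b (v z))), (H1 (v z)). reflexivity. }
    eapply qn_ext; [|apply E].
    destruct (lin_bound u Hu) as [Ku [Ku0 HKu]]. destruct (lin_bound v Hv) as [Kv [Kv0 HKv]].
    destruct (lin_bound p Hp) as [Kp [Kp0 HKp]].
    intros eps Heps. destruct (Hqn' eps Heps) as [C [C0 HC]].
    set (C' := Rmax 1 (Ku * C * Kp * Kv / eps)).
    assert (HC1 : 1 <= C') by apply Rmax_l. assert (HC2 : Ku * C * Kp * Kv / eps <= C') by apply Rmax_r.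
    exists C'. split; [lra|]. intros n z. pose proof (vnorm_nonneg z) as Hz.
    destruct n as [|n].
    + simpl. nra.
    + rewrite (iter_conj u (fun z => p (v z))). 
      pose proof (pow_le eps n ltac:(lra)).
      apply Rle_trans with (Ku * (C * eps ^ n * (Kp * (Kv * vnorm z)))).
      { eapply Rle_trans; [apply HKu|]. apply Rmult_le_compat_l; [lra|].
        eapply Rle_trans; [apply HC|]. apply Rmult_le_compat_l. apply Rmult_le_pos; lra.
        eapply Rle_trans; [apply HKp|]. apply Rmult_le_compat_l; [lra|apply HKv]. }
      replace (Ku * (C * eps ^ n * (Kp * (Kv * vnorm z)))) with (Ku * C * Kp * Kv / eps * eps ^ S n * vnorm z)
        by (simpl; field; lra).
      apply Rmult_le_compat_r; auto. apply Rmult_le_compat_r. apply pow_le; lra. auto.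
Qed.
Lemma series_UWV {X Y : CNormed} (HY : complete Y) (U : Y -> Y) (W : X -> Y) (V : X -> X) :
  bounded_linear U -> bounded_linear W -> bounded_linear V -> (qn U \/ qn V) ->
  exists s, bounded_linear s /\
    forall x, conv (fun n => psum (fun n x => Nat.iter n U (W (Nat.iter n V x))) n x) (s x).
Proof.
  intros HU HW HV Hq.
  destruct (lin_bound U HU) as [KU [KU0 HKU]]. destruct (lin_bound W HW) as [KW [KW0 HKW]].
  destruct (lin_bound V HV) as [KV [KV0 HKV]].
  assert (Ht : forall n, bounded_linear (fun x => Nat.iter n U (W (Nat.iter n V x)))).
  { intro n. apply (bl_comp (fun y => Nat.iter n U y)). apply iter_lin; auto.
    apply (bl_comp W); auto. apply iter_lin; auto. }
  destruct Hq as [Hq|Hq].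
  - destruct (Hq (/ (2 * KV))) as [C [C0 HC]]. apply Rinv_0_lt_compat; lra.
    apply (series_exists HY _ (C * KW)); auto. apply Rmult_le_pos; lra.
    intros n x. pose proof (vnorm_nonneg x). pose proof (pow_le (/ (2 * KV)) n ltac:(left; apply Rinv_0_lt_compat; lra)).
    pose proof (pow_le KV n ltac:(lra)).
    eapply Rle_trans; [apply HC|].
    apply Rle_trans with (C * (/ (2 * KV)) ^ n * (KW * (KV ^ n * vnorm x))).
    { apply Rmult_le_compat_l. apply Rmult_le_pos; lra. eapply Rle_trans; [apply HKW|].
      apply Rmult_le_compat_l; [lra|]. apply (iter_bound V KV); auto; lra. }
    replace (C * (/ (2 * KV)) ^ n * (KW * (KV ^ n * vnorm x))) with (C * KW * ((/ (2 * KV)) ^ n * KV ^ n) * vnorm x) by ring.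
    rewrite <- Rpow_mult_distr. replace (/ (2 * KV) * KV) with (/2) by (field; lra). lra.
  - destruct (Hq (/ (2 * KU))) as [C [C0 HC]]. apply Rinv_0_lt_compat; lra.
    apply (series_exists HY _ (C * KW)); auto. apply Rmult_le_pos; lra.
    intros n x. pose proof (vnorm_nonneg x). pose proof (pow_le (/ (2 * KU)) n ltac:(left; apply Rinv_0_lt_compat; lra)).
    pose proof (pow_le KU n ltac:(lra)).
    eapply Rle_trans; [apply (iter_bound U KU); [lra|apply HKU]|].
    apply Rle_trans with (KU ^ n * (KW * (C * (/ (2 * KU)) ^ n * vnorm x))).
    { apply Rmult_le_compat_l; auto. eapply Rle_trans; [apply HKW|]. apply Rmult_le_compat_l; [lra|]. apply HC. }
    replace (KU ^ n * (KW * (C * (/ (2 * KU)) ^ n * vnorm x))) with (C * KW * ((/ (2 * KU)) ^ n * KU ^ n) * vnorm x) by ring.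
    rewrite <- Rpow_mult_distr. replace (/ (2 * KU) * KU) with (/2) by (field; lra). lra.
Qed.

Lemma gD_lowT {X Y : CNormed} (HY : complete Y) (a : X -> X) (c : X -> Y) (d : Y -> Y) :
  bounded_linear c -> has_gDrazin a -> has_gDrazin d -> has_gDrazin (lowT a c d).
Proof.
  intros Hc [Ha [ad [Had [A1 [A2 Aq]]]]] [Hd [dd [Hdd [D1 [D2 Dq]]]]].
  destruct (spec_p a ad Ha Had A1 A2) as [Hpa [Hpaa Hpap]].
  destruct (spec_p d dd Hd Hdd D1 D2) as [Hpd [Hpdd Hpdp]].
  assert (Qa : qn (fun x => a (pid a ad x))) by (apply gD_q; auto).
  assert (Qd : qn (fun y => d (pid d dd y))) by (apply gD_q; auto).
  set (pa := pid a ad) in *. set (pd := pid d dd) in *.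
  set (qa := fun x => a (pa x)) in *. set (qd := fun y => d (pd y)) in *.
  set (W1 := fun x => dd (dd (c (pa x)))).
  set (W2 := fun x => pd (c (ad (ad x)))).
  assert (Hqa : bounded_linear qa) by (apply (bl_comp a pa); auto).
  assert (Hqd : bounded_linear qd) by (apply (bl_comp d pd); auto).
  assert (HW1 : bounded_linear W1).
  { apply (bl_comp dd); auto. apply (bl_comp dd); auto. apply (bl_comp c pa); auto. }
  assert (HW2 : bounded_linear W2).
  { apply (bl_comp pd); auto. apply (bl_comp c); auto. apply (bl_comp ad ad); auto. }
  destruct (series_UWV HY dd W1 qa Hdd HW1 Hqa (or_intror Qa)) as [s1 [Hs1 Cs1]].
  destruct (series_UWV HY qd W2 ad Hqd HW2 Had (or_introl Qd)) as [s2 [Hs2 Cs2]].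
  pose proof (series_tele dd W1 qa s1 Hdd Cs1) as Tele1.
  pose proof (series_tele qd W2 ad s2 Hqd Cs2) as Tele2.
  assert (Hddd : forall w, d (dd (dd w)) = dd w).
  { intro w. rewrite (D2 (dd w)), (D1 w). reflexivity. }
  assert (F1a : forall x, d (dd (s1 x)) = s1 x).
  { apply (series_left (fun n x => Nat.iter n dd (W1 (Nat.iter n qa x))) s1 (fun y => d (dd y))); auto. apply (bl_comp d dd); auto.
    intros [|n] x; simpl; unfold W1; apply Hddd. }
  assert (F1b : forall x, s1 (pa x) = s1 x).
  { apply (series_right _ _ pa Cs1). intros n x. cbv beta.
    rewrite <- (iter_comm qa qa pa). unfold W1. rewrite Hpap. reflexivity.
    intro z. unfold qa. rewrite Hpaa, Hpap. reflexivity. }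
  assert (F2a : forall x, pd (s2 x) = s2 x).
  { apply (series_left (fun n x => Nat.iter n qd (W2 (Nat.iter n ad x))) s2 pd); auto. intros n x. cbv beta.
    rewrite (iter_comm qd qd pd). unfold W2. rewrite Hpdp. reflexivity.
    intro z. unfold qd. rewrite Hpdd, Hpdp. reflexivity. }
  assert (F2b : forall x, s2 (a (ad x)) = s2 x).
  { apply (series_right _ _ (fun x => a (ad x)) Cs2). intros [|n] x; cbv beta.
    - simpl. unfold W2. rewrite A1. reflexivity.
    - rewrite !Nat.iter_succ_r. rewrite A1. reflexivity. }
  set (K := fun x => dd (c (ad x))).
  set (S := fun x => vadd (vadd (s1 x) (s2 x)) (vopp (K x))).
  assert (HK : bounded_linear K). { apply (bl_comp dd); auto. apply (bl_comp c ad); auto. }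
  assert (HS : bounded_linear S). { apply bl_sub; auto. apply bl_add; auto. }
  assert (Ei : forall x, d (s1 x) = vadd (dd (c (pa x))) (s1 (a x))).
  { intro x. rewrite (Tele1 x) at 1. rewrite (lin_add d); auto. unfold W1. rewrite Hddd, F1a.
    unfold qa. rewrite <- Hpaa, F1b. reflexivity. }
  assert (Eii : forall x, d (s2 x) = vadd (s2 (a x)) (vopp (pd (c (ad x))))).
  { intro x. pose proof (Tele2 (a x)) as H. unfold qd, W2 in H. rewrite F2a in H.
    rewrite <- (A2 x) in H. rewrite (A1 x), F2b in H. rewrite H. gsolve. }
  assert (E1 : forall x, vadd (c (ad x)) (d (S x)) = vadd (S (a x)) (dd (c x))).
  { intro x. unfold S. rewrite (lin_sub d), (lin_add d); auto. rewrite Ei, Eii.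
    unfold K. rewrite <- (A2 x). unfold pd, pa, pid. rewrite (lin_sub c), (lin_sub dd); auto.
    gsolve. }
  assert (Hz : forall z, dd (d (pd z)) = vzero).
  { intro z. unfold pd, pid. rewrite (lin_sub d), (lin_sub dd); auto. rewrite (D2 z), (D1 (d z)). apply vadd_opp. }
  assert (E2 : forall x, vadd (vadd (S (a (ad x))) (dd (c (ad x)))) (dd (d (S x))) = S x).
  { intro x. unfold S. rewrite (lin_sub d), (lin_add d), (lin_sub dd), (lin_add dd); auto.
    assert (Z1 : s1 (a (ad x)) = vzero).
    { rewrite <- F1b. unfold pa, pid. rewrite A1, vadd_opp. apply lin_zero; auto. }
    rewrite Z1, F2b. rewrite <- (F2a x) at 2. rewrite Hz.
    rewrite <- (D2 (s1 x)), F1a. unfold K. rewrite A1, D1. gsolve. }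
  split; [apply bl_lowT; auto|].
  exists (fun p : dsum X Y => ((ad (fst p), vadd (S (fst p)) (dd (snd p))) : dsum X Y)).
  split; [|split; [|split]].
  - apply bl_pair. apply (bl_comp ad (fun p : dsum X Y => fst p)); auto; apply bl_fst.
    apply bl_add. apply (bl_comp S (fun p : dsum X Y => fst p)); auto; apply bl_fst.
    apply (bl_comp dd (fun p : dsum X Y => snd p)); auto; apply bl_snd.
  - intros [x y]. unfold lowT; simpl. f_equal. apply A1.
    rewrite !(lin_add dd), (lin_add d), (lin_add dd); auto. rewrite (D1 y).
    transitivity (vadd (vadd (vadd (S (a (ad x))) (dd (c (ad x)))) (dd (d (S x)))) (dd y)).
    gsolve. rewrite E2. reflexivity.
  - intros [x y]. unfold lowT; simpl. f_equal. apply A2.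
    rewrite (lin_add d), (lin_add dd); auto. rewrite (D2 y).
    transitivity (vadd (vadd (c (ad x)) (d (S x))) (dd (d y))). gsolve.
    rewrite E1. gsolve.
  - set (a' := fun x => vadd (a x) (vopp (a (a (ad x))))).
    set (d' := fun y => vadd (d y) (vopp (d (d (dd y))))).
    set (c' := fun x => vadd (c x) (vopp (vadd (c (a (ad x))) (vadd (d (c (ad x))) (d (d (S x))))))).
    assert (Ha' : bounded_linear a'). { apply bl_sub; auto. apply (bl_comp a); auto. apply (bl_comp a ad); auto. }
    assert (Hd' : bounded_linear d'). { apply bl_sub; auto. apply (bl_comp d); auto. apply (bl_comp d dd); auto. }
    assert (Hc' : bounded_linear c').
    { apply bl_sub; auto. apply bl_add. apply (bl_comp c); auto. apply (bl_comp a ad); auto.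
      apply bl_add. apply (bl_comp d); auto. apply (bl_comp c ad); auto.
      apply (bl_comp d); auto. apply (bl_comp d S); auto. }
    apply qnil_of_qn. eapply qn_ext.
    apply (qn_lowT a' c' d'); auto. apply qn_of_qnil; auto. apply qn_of_qnil; auto.
    intros [x y]. unfold lowT, a', c', d'; simpl. f_equal.
    rewrite !(lin_add d); auto. gsolve.
Qed.
Lemma gD_upT {X Y : CNormed} (HX : complete X) (a : X -> X) (c : Y -> X) (d : Y -> Y) :
  bounded_linear c -> has_gDrazin a -> has_gDrazin d ->
  has_gDrazin (fun p : dsum X Y => ((vadd (a (fst p)) (c (snd p)), d (snd p)) : dsum X Y)).
Proof.
  intros Hc Ga Gd. pose proof (gD_lowT HX d c a Hc Gd Ga) as GL.
  assert (HL : bounded_linear (lowT d c a)) by (destruct GL; auto).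
  set (u := fun q : dsum Y X => ((snd (lowT d c a q), fst (lowT d c a q)) : dsum X Y)).
  set (v := fun p : dsum X Y => ((snd p, fst p) : dsum Y X)).
  assert (Hu : bounded_linear u).
  { apply bl_pair. apply (bl_comp (fun p : dsum Y X => snd p)); auto; apply bl_snd.
    apply (bl_comp (fun p : dsum Y X => fst p)); auto; apply bl_fst. }
  assert (Hv : bounded_linear v). { apply bl_pair. apply bl_snd. apply bl_fst. }
  eapply gD_ext. apply (cline u v Hu Hv). eapply gD_ext; [apply GL|].
  intros [y x]; reflexivity.
  intros [x y]. unfold u, v, lowT; simpl. f_equal. apply vadd_comm.
Qed.

Lemma gD_add0 {Z : CNormed} (HZ : complete Z) (a b : Z -> Z) :
  has_gDrazin a -> has_gDrazin b -> (forall z, a (b z) = vzero) -> has_gDrazin (fun z => vadd (a z) (b z)).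
Proof.
  intros Ga Gb Hab. assert (Ha : bounded_linear a) by (destruct Ga; auto).
  assert (Hb : bounded_linear b) by (destruct Gb; auto).
  pose proof (gD_lowT HZ a (fun z => z) b bl_id Ga Gb) as GL.
  set (u := fun w : dsum Z Z => vadd (fst w) (b (snd w))).
  set (v := fun z : Z => ((a z, z) : dsum Z Z)).
  assert (Hu : bounded_linear u). { apply bl_add. apply bl_fst. apply (bl_comp b (fun w : dsum Z Z => snd w)); auto; apply bl_snd. }
  assert (Hv : bounded_linear v). { apply bl_pair; auto. apply bl_id. }
  eapply gD_ext. apply (cline u v Hu Hv). eapply gD_ext; [apply GL|].
  intros [z1 z2]. unfold u, v, lowT; simpl. f_equal. rewrite (lin_add a), Hab, vadd_zero; auto.
  intro z; reflexivity.
Qed.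

Lemma gD_PQ {Z : CNormed} (HZ : complete Z) (a b : Z -> Z) :
  has_gDrazin a -> has_gDrazin b -> (forall z, b (a (a z)) = vzero) -> (forall z, b (a (b z)) = vzero) ->
  has_gDrazin (fun z => vadd (a z) (b z)).
Proof.
  intros Ga Gb H1 H2. assert (Ha : bounded_linear a) by (destruct Ga; auto).
  assert (Hb : bounded_linear b) by (destruct Gb; auto).
  set (s := fun z => vadd (a z) (b z)).
  assert (Hs : bounded_linear s) by (apply bl_add; auto).
  assert (Gx : has_gDrazin (fun z => a (s z))).
  { apply (cline a s Ha Hs). eapply gD_ext.
    apply (gD_add0 HZ (fun z => b (a z)) (fun z => a (a z))).
    apply (gD_nil _ 2). apply bl_ab; auto. intro z; simpl. apply H2.
    apply gD_sq; auto. intro z; apply H1.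
    intro z; unfold s; apply vadd_comm. }
  assert (Gy : has_gDrazin (fun z => b (s z))).
  { apply (cline b s Hb Hs). eapply gD_ext.
    apply (gD_add0 HZ (fun z => b (b z)) (fun z => a (b z))).
    apply gD_sq; auto.
    apply (gD_nil _ 2). apply bl_ab; auto. intro z; simpl. rewrite H2. apply lin_zero; auto.
    intro z. rewrite H2. apply lin_zero; auto.
    intro z; unfold s; apply vadd_comm. }
  apply gD_sqrt; auto. eapply gD_ext.
  apply (gD_add0 HZ (fun z => b (s z)) (fun z => a (s z))); auto.
  - intro z. unfold s. rewrite (lin_add b), (H1 (vadd (a z) (b z))), vadd0l; auto.
    rewrite (lin_add a), (lin_add b), H1, H2, vadd_zero, (lin_zero b); auto.
  - intro z. unfold s at 1. apply vadd_comm.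
Qed.
Theorem theorem3p8 (X Y : CNormed) (HX : complete X) (HY : complete Y)
  (A : X -> X) (B : Y -> X) (C : X -> Y) (D : Y -> Y)
  (hB : bounded_linear B) (hC : bounded_linear C)
  (gA : has_gDrazin A) (gD : has_gDrazin D)
  (hABC : forall x, A (B (C x)) = vzero)
  (hDCA : forall x, D (C (A x)) = vzero)
  (hDCB : forall y, D (C (B y)) = vzero)
  (hCBCB : forall y, C (B (C (B y))) = vzero) :
  has_gDrazin (opmat A B C D).
Proof.
  assert (hA : bounded_linear A) by (destruct gA; auto).
  assert (hD : bounded_linear D) by (destruct gD; auto).
  assert (HZ : complete (dsum X Y)) by (apply dsum_complete; auto).
  set (P := fun p : dsum X Y => ((vadd (A (fst p)) (B (snd p)), C (fst p)) : dsum X Y)).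
  set (Q := fun p : dsum X Y => ((vzero, D (snd p)) : dsum X Y)).
  assert (HP : bounded_linear P).
  { apply bl_pair. apply bl_add. apply (bl_comp A (fun p : dsum X Y => fst p)); auto; apply bl_fst.
    apply (bl_comp B (fun p : dsum X Y => snd p)); auto; apply bl_snd.
    apply (bl_comp C (fun p : dsum X Y => fst p)); auto; apply bl_fst. }
  assert (G0X : has_gDrazin (fun _ : X => @vzero X)).
  { apply (gD_nil _ 1). apply bl_zero. intros; reflexivity. }
  assert (G0Y : has_gDrazin (fun _ : Y => @vzero Y)).
  { apply (gD_nil _ 1). apply bl_zero. intros; reflexivity. }
  assert (GQ : has_gDrazin Q).
  { eapply gD_ext. apply (gD_lowT HY (fun _ => vzero) (fun _ => vzero) D); auto. apply bl_zero.
    intros [x y]. unfold lowT, Q; simpl. rewrite vadd0l; auto. }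
  assert (GP : has_gDrazin P).
  { apply gD_sqrt; auto.
    assert (Gx : has_gDrazin (fun p : dsum X Y => ((vadd (vadd (A (A (fst p))) (B (C (fst p)))) (A (B (snd p))), (fun _ : Y => @vzero Y) (snd p)) : dsum X Y))).
    { apply (gD_upT HX (fun x => vadd (A (A x)) (B (C x))) (fun y => A (B y)) (fun _ : Y => @vzero Y)); auto.
      apply (bl_comp A B); auto.
      apply gD_add0; auto. apply gD_sq; auto. apply (gD_nil _ 3). apply (bl_comp B C); auto.
      intro x; simpl. rewrite hCBCB. apply lin_zero; auto.
      intro x. rewrite hABC. apply lin_zero; auto. }
    assert (Gy : has_gDrazin (lowT (fun _ : X => @vzero X) (fun x => C (A x)) (fun y => C (B y)))).
    { apply gD_lowT; auto. apply (bl_comp C A); auto. apply (gD_nil _ 2). apply (bl_comp C B); auto.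
      intro y; simpl. apply hCBCB. }
    eapply gD_ext. apply (gD_add0 HZ _ _ Gx Gy).
    - intros [x y]. unfold lowT; simpl. f_equal.
      + rewrite (lin_zero A), (lin_zero A), (lin_zero C), (lin_zero B), vadd_zero, <- (lin_add C), hABC, vadd_zero; auto.
    - intros [x y]. unfold lowT, P; simpl. f_equal.
      + rewrite (lin_add A); auto. gsolve.
      + rewrite (lin_add C); auto. gsolve. }
  eapply gD_ext. apply (gD_PQ HZ P Q GP GQ).
  - intros [x y]. unfold P, Q; simpl. f_equal. rewrite (lin_add C), (lin_add D), hDCA, hDCB, vadd_zero; auto.
  - intros [x y]. unfold P, Q; simpl. f_equal. rewrite (lin_zero C), (lin_zero D); auto.
  - intros [x y]. unfold P, Q, opmat; simpl. f_equal. apply vadd_zero.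
Qed.
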